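(* Let $M$ be an intrinsically projective right $R$-module and let $A,B\le M$ be finitely $M$-presented submodules. Then $A+B$ is finitely $M$-presented if and only if $A\cap B$ is finitely $M$-generated.
   Context: $M^{(n)}$ denotes the direct sum of $n$ copies of $M$. A module $N$ is finitely $M$-generated if there is an epimorphism $M^{(n)}\to N$ for some $n>0$. $N$ is finitely $M$-presented if there is an exact sequence $M^{(\ell)}\to M^{(n)}\to N\to 0$ for some integers $n,\ell>0$. $M$ is intrinsically projective if for every integer $n>0$, every submodule $N\le M$, every epimorphism $\alpha:M^{(n)}\to N$ and every homomorphism $\beta:M\to N$, there exists $\gamma:M\to M^{(n)}$ with $\alpha\gamma=\beta$. *)

(* Defs.v *)
From HB Require Import structures.
From mathcomp Require Import all_boot all_algebra.
Set Implicit Arguments. Unset Strict Implicit. Unset Printing Implicit Defensive.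
Import GRing.Theory.
Local Open Scope ring_scope.

(* Right R-modules are represented as left modules over the converse ring R^c;
   the definitions below are stated for an arbitrary (left) module M over a
   ring S, and instantiated with S := R^c in the main statement. *)
Section ModuleDefs.
Variable S : pzRingType.
Variable M : lmodType S.

Definition dsum (n : nat) : lmodType S := {ffun 'I_n -> M}.

Definition submodule (N : M -> Prop) : Prop :=
  N 0 /\ forall (a : S) (x y : M), N x -> N y -> N (a *: x + y).

Definition sum_sub (A B : M -> Prop) : M -> Prop :=
  fun x => exists a b, A a /\ B b /\ x = a + b.
Definition cap_sub (A B : M -> Prop) : M -> Prop := fun x => A x /\ B x.

Definition image_of (U V : Type) (f : U -> V) : V -> Prop :=
  fun v => exists u, f u = v.

Definition fin_M_generated (N : M -> Prop) : Prop :=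
  exists n : nat, (0 < n)%N /\
    exists f : {linear dsum n -> M}, forall x, N x <-> image_of f x.

Definition fin_M_presented (N : M -> Prop) : Prop :=
  exists n l : nat, (0 < n)%N /\ (0 < l)%N /\
    exists (f : {linear dsum n -> M}) (g : {linear dsum l -> dsum n}),
      (forall x, N x <-> image_of f x) /\
      (forall y, f y = 0 <-> image_of g y).

(* M is intrinsically projective; a map into the submodule N is represented
   as a linear map into M with values in N. *)
Definition intrinsically_projective : Prop :=
  forall n : nat, (0 < n)%N ->
  forall N : M -> Prop, submodule N ->
  forall alpha : {linear dsum n -> M}, (forall x, N x <-> image_of alpha x) ->
  forall beta : {linear M -> M}, (forall x, N (beta x)) ->
  exists gamma : {linear M -> dsum n}, forall x, alpha (gamma x) = beta x.

End ModuleDefs.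

(* Main.v *)
Require Import Defs.
From HB Require Import structures.
From mathcomp Require Import all_boot all_algebra.
Import GRing.Theory.
Set Implicit Arguments. Unset Strict Implicit. Unset Printing Implicit Defensive.

Section Aux.
Local Open Scope ring_scope.
Variable S : pzRingType.

Definition mkL (U V : lmodType S) (f : U -> V) (H : linear f) : {linear U -> V} :=
  HB.pack f (GRing.isLinear.Build S U V *:%R f H).

Lemma addL_lin (U V : lmodType S) (F G : {linear U -> V}) :
  linear (fun x => F x + G x).
Proof. by move=> a x y; rewrite !linearP scalerDr addrACA. Qed.
Lemma oppL_lin (U V : lmodType S) (F : {linear U -> V}) :
  linear (fun x => - F x).
Proof. by move=> a x y; rewrite linearP (opprD (a *: F x)) scalerN. Qed.
Lemma compL_lin (U V W : lmodType S) (F : {linear V -> W}) (G : {linear U -> V}) :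
  linear (fun x => F (G x)).
Proof. by move=> a x y; rewrite !linearP. Qed.
Definition addL U V F G := mkL (@addL_lin U V F G).
Definition oppL U V F := mkL (@oppL_lin U V F).
Definition compL U V W F G := mkL (@compL_lin U V W F G).

Variable M : lmodType S.
Notation D n := (dsum M n).

Definition inj n (i : 'I_n) (m : M) : D n := [ffun j => if j == i then m else 0].
Lemma inj_lin n i : linear (@inj n i).
Proof.
move=> a x y; apply/ffunP=> j; rewrite !ffunE; case: eqP => _ //.
by rewrite scaler0 addr0.
Qed.

Lemma dsum_decomp n (x : D n) : x = \sum_i inj i (x i).
Proof.
apply/ffunP=> j; rewrite sum_ffunE (bigD1 j) //= big1 ?addr0.
  by rewrite ffunE eqxx.
by move=> i ij; rewrite ffunE eq_sym (negbTE ij).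
Qed.

Lemma sub_neg (N : M -> Prop) : submodule N -> forall x, N x -> N (- x).
Proof. by case=> N0 NP x Nx; have := NP (-1) x 0 Nx N0; rewrite scaleN1r addr0. Qed.

Lemma sub_add (N : M -> Prop) : submodule N -> forall x y, N x -> N y -> N (x + y).
Proof. by case=> N0 NP x y Nx Ny; have := NP 1 x y Nx Ny; rewrite scale1r. Qed.

Lemma lift_lin (IP : intrinsically_projective M) n (n0 : (0 < n)%N) (N : M -> Prop)
  (sN : submodule N) (alpha : {linear D n -> M})
  (Ha : forall x, N x <-> image_of alpha x) k (beta : {linear D k -> M})
  (Hb : forall x, N (beta x)) :
  exists gamma : {linear D k -> D n}, forall x, alpha (gamma x) = beta x.
Proof.
have: forall i : 'I_k, exists g : {linear M -> D n},
    forall x, alpha (g x) = beta (inj i x).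
  move=> i; apply: (IP n n0 N sN alpha Ha (compL beta (mkL (@inj_lin k i)))).
  by move=> x; apply: Hb.
case/fin_all_exists => g Hg.
have glin : linear (fun x : D k => \sum_i g i (x i)).
  move=> a x y; rewrite scaler_sumr -big_split; apply: eq_bigr => i _.
  by rewrite !ffunE linearP.
exists (mkL glin) => x /=.
rewrite linear_sum; under eq_bigr do rewrite Hg.
by rewrite -linear_sum -dsum_decomp.
Qed.

Section Pair.
Variables n m : nat.
Definition lft (x : D (n + m)) : D n := [ffun i => x (lshift m i)].
Definition rgt (x : D (n + m)) : D m := [ffun j => x (rshift n j)].
Definition pr (y : D n) (z : D m) : D (n + m) :=
  [ffun k => match split k with inl i => y i | inr j => z j end].

Lemma lft_pr y z : lft (pr y z) = y.
Proof.
apply/ffunP=> i; rewrite !ffunE.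
have E : split (lshift m i) = inl i := unsplitK (inl i : 'I_n + 'I_m).
by rewrite E.
Qed.
Lemma rgt_pr y z : rgt (pr y z) = z.
Proof.
apply/ffunP=> i; rewrite !ffunE.
have E : split (rshift n i) = inr i := unsplitK (inr i : 'I_n + 'I_m).
by rewrite E.
Qed.
Lemma pr_lr x : pr (lft x) (rgt x) = x.
Proof.
apply/ffunP=> k; rewrite !ffunE.
case E: (split k) => [i|j]; rewrite ffunE; congr (x _);
  by rewrite -[RHS](splitK k) E.
Qed.
Lemma lft_lin : linear lft.
Proof. by move=> a x y; apply/ffunP=> i; rewrite !ffunE. Qed.
Lemma rgt_lin : linear rgt.
Proof. by move=> a x y; apply/ffunP=> i; rewrite !ffunE. Qed.
Lemma pr_inj x x' : lft x = lft x' -> rgt x = rgt x' -> x = x'.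
Proof. by move=> h1 h2; rewrite -(pr_lr x) -(pr_lr x') h1 h2. Qed.
Lemma prL_lin (U : lmodType S) (u : {linear U -> D n}) (v : {linear U -> D m}) :
  linear (fun x => pr (u x) (v x)).
Proof.
move=> a x y; apply: pr_inj;
  by rewrite ?lft_lin ?rgt_lin ?lft_pr ?rgt_pr linearP.
Qed.
Definition lftL := mkL lft_lin.
Definition rgtL := mkL rgt_lin.
Definition prL U u v := mkL (@prL_lin U u v).
End Pair.

Lemma ker_gen (IP : intrinsically_projective M) (N : M -> Prop) (sN : submodule N)
  n l n' (n0 : (0 < n)%N) (l0 : (0 < l)%N) (n'0 : (0 < n')%N)
  (f : {linear D n -> M}) (g : {linear D l -> D n})
  (Hf : forall x, N x <-> image_of f x) (Hg : forall y, f y = 0 <-> image_of g y)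
  (f' : {linear D n' -> M}) (Hf' : forall x, N x <-> image_of f' x) :
  exists m, (0 < m)%N /\ exists h : {linear D m -> D n'},
    forall y, f' y = 0 <-> image_of h y.
Proof.
have [p Hp] := lift_lin IP n0 sN Hf (beta := f') (fun x => proj2 (Hf' _) (ex_intro _ x erefl)).
have [q Hq] := lift_lin IP n'0 sN Hf' (beta := f) (fun x => proj2 (Hf _) (ex_intro _ x erefl)).
exists (n' + l)%N; split; first by rewrite addn_gt0 n'0.
exists (addL (addL (@lftL n' l) (oppL (compL q (compL p (@lftL n' l)))))
             (compL q (compL g (@rgtL n' l)))) => y; split.
  move=> fy; have [u Hu] : image_of g (p y) by apply/Hg; rewrite Hp.
  exists (pr y u) => /=; rewrite lft_pr rgt_pr Hu.
  by rewrite addrNK.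
case=> z <- /=.
rewrite !linearD linearN !Hq Hp.
have -> : f (g (rgt z)) = 0 by apply/Hg; exists (rgt z).
by rewrite addrN add0r.
Qed.

End Aux.
Local Open Scope ring_scope.

Lemma sum_sub_sub (S : pzRingType) (M : lmodType S) (A B : M -> Prop) :
  submodule A -> submodule B -> submodule (sum_sub A B).
Proof.
move=> [A0 AP] [B0 BP]; split; first by exists 0, 0; rewrite addr0.
move=> a x y [a1 [b1 [h1 [h2 ->]]]] [a2 [b2 [h3 [h4 ->]]]].
exists (a *: a1 + a2), (a *: b1 + b2); split; first exact: AP.
split; first exact: BP.
by rewrite scalerDr addrACA.
Qed.

Theorem mainTheorem11 (R : pzRingType) (M : lmodType R^c) (A B : M -> Prop) :
  intrinsically_projective M ->
  submodule A -> submodule B ->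
  fin_M_presented A -> fin_M_presented B ->
  (fin_M_presented (sum_sub A B) <-> fin_M_generated (cap_sub A B)).
Proof.
move=> IP sA sB [nA [lA [nA0 [lA0 [fA [gA [HfA HgA]]]]]]]
  [nB [lB [nB0 [lB0 [fB [gB [HfB HgB]]]]]]].
set f' := addL (compL fA (@lftL _ M nA nB)) (compL fB (@rgtL _ M nA nB)).
have f'E x : f' x = fA (lft x) + fB (rgt x) by [].
have sS := sum_sub_sub sA sB.
have nn0 : (0 < nA + nB)%N by rewrite addn_gt0 nA0.
have Hf' : forall x, sum_sub A B x <-> image_of f' x.
  move=> x; split.
    case=> a [b [Aa [Bb ->]]].
    have [y <-] := proj1 (HfA a) Aa; have [z <-] := proj1 (HfB b) Bb.
    by exists (pr y z); rewrite f'E lft_pr rgt_pr.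
  case=> w <-; rewrite f'E; exists (fA (lft w)), (fB (rgt w)).
  split; first by apply/HfA; exists (lft w).
  by split=> //; apply/HfB; exists (rgt w).
split.
  case=> [n [l [n0 [l0 [f [g [Hf Hg]]]]]]].
  have [m [m0 [h Hh]]] := ker_gen IP sS n0 l0 nn0 Hf Hg Hf'.
  exists m; split=> //.
  exists (compL fA (compL (@lftL _ M nA nB) h)) => x; split.
    case=> Ax Bx.
    have [y Hy] := proj1 (HfA x) Ax.
    have [z Hz] := proj1 (HfB (- x)) (sub_neg sB Bx).
    have [w Hw] : image_of h (pr y z).
      by apply/Hh; rewrite f'E lft_pr rgt_pr Hy Hz addrN.
    by exists w => /=; rewrite Hw lft_pr.
  case=> w <- /=; split; first by apply/HfA; exists (lft (h w)).
  have E : f' (h w) = 0 by apply/Hh; exists w.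
  rewrite f'E in E.
  have -> : fA (lft (h w)) = - fB (rgt (h w)) by apply/eqP; rewrite -addr_eq0 E.
  by apply: sub_neg => //; apply/HfB; exists (rgt (h w)).
case=> [k [k0 [hc Hh]]].
have [pA HpA] := lift_lin IP nA0 sA HfA (beta := hc)
  (fun w => proj1 (proj2 (Hh _) (ex_intro _ w erefl))).
have [pB HpB] := lift_lin IP nB0 sB HfB (beta := hc)
  (fun w => proj2 (proj2 (Hh _) (ex_intro _ w erefl))).
exists (nA + nB)%N, (lA + lB + k)%N; split=> //; split.
  by rewrite !addn_gt0 lA0.
exists f', (prL (addL (compL gA (compL (@lftL _ M lA lB) (@lftL _ M (lA + lB) k)))
                      (compL pA (@rgtL _ M (lA + lB) k)))
                (addL (compL gB (compL (@rgtL _ M lA lB) (@lftL _ M (lA + lB) k)))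
                      (oppL (compL pB (@rgtL _ M (lA + lB) k))))).
split=> // y; split.
  rewrite f'E => E.
  have Bc : B (fA (lft y)).
    have -> : fA (lft y) = - fB (rgt y) by apply/eqP; rewrite -addr_eq0 E.
    by apply: sub_neg => //; apply/HfB; exists (rgt y).
  have Ac : A (fA (lft y)) by apply/HfA; exists (lft y).
  have [w Hw] := proj1 (Hh _) (conj Ac Bc).
  have [u Hu] : image_of gA (lft y - pA w) by apply/HgA; rewrite linearB HpA Hw addrN.
  have [v Hv] : image_of gB (rgt y + pB w).
    by apply/HgB; rewrite linearD HpB Hw addrC.
  exists (pr (pr u v) w) => /=.
  by rewrite !lft_pr !rgt_pr Hu Hv addrK subrK pr_lr.
case=> z <-; rewrite f'E /= lft_pr rgt_pr (linearD fA) (linearB fB) HpA HpB.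
have -> : fA (gA (lft (lft z))) = 0 by apply/HgA; exists (lft (lft z)).
have -> : fB (gB (rgt (lft z))) = 0 by apply/HgB; exists (rgt (lft z)).
by rewrite !add0r addrN.
Qed.
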